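(* Let $G$ be the $m\times n$ grid with $m,n\ge 2$. For all $1\le z<z'<z''\le n$, the set $\{(1,z),(m,z'),(1,z'')\}$ is a landmark set of $G$.
   Context: The $m\times n$ grid $G$ has vertex set $V=\{(i,j):1\le i\le m,\ 1\le j\le n\}$, with $(i_1,j_1),(i_2,j_2)$ adjacent iff $|i_1-i_2|+|j_1-j_2|=1$; thus $d((i_1,j_1),(i_2,j_2))=|i_1-i_2|+|j_1-j_2|$. A vertex $x$ separates $u,v$ if $d(x,u)\neq d(x,v)$. A landmark set is $L\subseteq V$ such that every pair of distinct vertices is separated by some vertex of $L$. *)

(* Defs.v *)
From Stdlib Require Import Arith List.
Import ListNotations.

Definition absdiff (a b : nat) : nat := (a - b) + (b - a).

Definition in_grid (m n : nat) (v : nat * nat) : Prop :=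
  1 <= fst v <= m /\ 1 <= snd v <= n.

(* graph distance in the grid (Manhattan distance) *)
Definition grid_dist (u v : nat * nat) : nat :=
  absdiff (fst u) (fst v) + absdiff (snd u) (snd v).

Definition separates (x u v : nat * nat) : Prop :=
  grid_dist x u <> grid_dist x v.

Definition landmark_set (m n : nat) (L : list (nat * nat)) : Prop :=
  (forall x, In x L -> in_grid m n x) /\
  forall u v, in_grid m n u -> in_grid m n v -> u <> v ->
    exists x, In x L /\ separates x u v.

(* Main.v *)
Require Import Defs.
From Stdlib Require Import Arith List Lia.
Import ListNotations.

Lemma ad_le x y : x <= y -> absdiff x y + x = y.
Proof. unfold absdiff; lia. Qed.
Lemma ad_ge x y : y <= x -> absdiff x y + y = x.
Proof. unfold absdiff; lia. Qed.

Ltac fix_ad := repeat match goal with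
  | H : context [absdiff ?x ?y] |- _ =>
      lazymatch goal with
      | _ : absdiff x y + x = y |- _ => fail
      | _ : absdiff x y + y = x |- _ => fail
      | _ => first [ pose proof (ad_le x y ltac:(lia)) | pose proof (ad_ge x y ltac:(lia)) ]
      end
  end.

Lemma key (m n z z' z'' a b c d : nat) :
  2 <= m -> 2 <= n ->
  1 <= z -> z < z' -> z' < z'' -> z'' <= n ->
  1 <= a <= m -> 1 <= b <= n -> 1 <= c <= m -> 1 <= d <= n ->
  absdiff 1 a + absdiff z b = absdiff 1 c + absdiff z d ->
  absdiff m a + absdiff z' b = absdiff m c + absdiff z' d ->
  absdiff 1 a + absdiff z'' b = absdiff 1 c + absdiff z'' d ->
  a = c /\ b = d.
Proof.
  intros.
  assert (b <= z \/ z <= b <= z' \/ z' <= b <= z'' \/ z'' <= b) as Hb by lia.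
  assert (d <= z \/ z <= d <= z' \/ z' <= d <= z'' \/ z'' <= d) as Hd by lia.
  destruct Hb as [Hb|[Hb|[Hb|Hb]]]; destruct Hd as [Hd|[Hd|[Hd|Hd]]]; fix_ad.
  all: lia.
Qed.

Theorem mainTheorem13 (m n z z' z'' : nat) :
  2 <= m -> 2 <= n ->
  1 <= z -> z < z' -> z' < z'' -> z'' <= n ->
  landmark_set m n [(1, z); (m, z'); (1, z'')].
Proof.
  intros. split.
  - intros x Hx. simpl in Hx. unfold in_grid.
    destruct Hx as [<-|[<-|[<-|[]]]]; simpl; lia.
  - intros [a b] [c d] Hu Hv Hne. unfold in_grid in *; simpl in *.
    unfold separates, grid_dist; simpl.
    destruct (Nat.eq_dec (absdiff 1 a + absdiff z b) (absdiff 1 c + absdiff z d)) as [E1|E1];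
      [|exists (1,z); simpl; auto].
    destruct (Nat.eq_dec (absdiff m a + absdiff z' b) (absdiff m c + absdiff z' d)) as [E2|E2];
      [|exists (m,z'); simpl; auto].
    destruct (Nat.eq_dec (absdiff 1 a + absdiff z'' b) (absdiff 1 c + absdiff z'' d)) as [E3|E3];
      [|exists (1,z''); simpl; auto].
    exfalso. apply Hne.
    destruct (key m n z z' z'' a b c d) as [-> ->]; auto; lia.
Qed.
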